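(* Let $r\ge 1$ be such that $2r+1=t^2$ for an (odd) integer $t$. In $\mathcal{C}(B_r)$, let $V:=X_{2\lambda_1}$ and $W_i:=X_{\gamma^{it}}$ for $1\le i\le (t-1)/2$. Then the full fusion subcategory $\mathcal{D}(B_r)$ of $\mathcal{C}(B_r)$ generated by $\mathbf{1}, V, W_1,\dots,W_{(t-1)/2}$ has exactly these objects as its simple objects (up to isomorphism), i.e. their additive span is closed under tensor product, and $\mathcal{D}(B_r)$ is symmetric.
   Context: $\mathcal{C}(B_r)$ denotes the unitary modular (ribbon fusion) category $\mathcal{C}(\mathfrak{so}_{2r+1},q,\ell)$ associated with the quantum group of $\mathfrak{so}_{2r+1}$ at $\ell=4r+2$, $q=e^{\pi i/\ell}$ (equivalently the level-2 category $SO(2r+1)_2$). With fundamental weights $\lambda_1=(1,0,\dots,0),\dots,\lambda_{r-1}=(1,\dots,1,0)$, $\lambda_r=\tfrac12(1,\dots,1)$, its simple objects are labeled by $\mathbf{0},2\lambda_1,\gamma^1,\dots,\gamma^r,\varepsilon,\varepsilon'$ where $\gamma^i=\lambda_i$ for $1\le i\le r-1$, $\gamma^r=2\lambda_r$, $\varepsilon=\lambda_r$, $\varepsilon'=\lambda_1+\lambda_r$; the simple objects $X_{\mathbf 0}=\mathbf{1}$ and $X_{2\lambda_1}$ have dimension 1, the $X_{\gamma^i}$ have dimension 2, and $X_\varepsilon,X_{\varepsilon'}$ have dimension $\sqrt{2r+1}$; all simple objects are self-dual. The normalized $S$-matrix $\tilde s$ (with $\tilde s_{\mathbf 0,\mathbf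 0}=1$) satisfies $\tilde s(2\lambda_1,2\lambda_1)=1$, $\tilde s(2\lambda_1,\gamma^i)=2$, $\tilde s(2\lambda_1,\varepsilon)=\tilde s(2\lambda_1,\varepsilon')=-\sqrt{2r+1}$, $\tilde s(\gamma^i,\gamma^j)=4\cos(2ij\pi/(2r+1))$, $\tilde s(\gamma^i,\varepsilon)=\tilde s(\gamma^i,\varepsilon')=0$. The twists are $\theta_\lambda=q^{\langle\lambda+2\rho,\lambda\rangle}$ (normalized so short roots have squared length 2). A braided fusion subcategory $\mathcal{D}$ is symmetric if $c_{Y,X}c_{X,Y}=\mathrm{Id}_{X\otimes Y}$ for all $X,Y\in\mathcal{D}$, equivalently $\tilde s_{X,Y}=\dim(X)\dim(Y)$ for all simple $X,Y$ in $\mathcal{D}$. *)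

(* Defs.v *)
From Stdlib Require Import Reals Lia Arith List.
Open Scope R_scope.

(* Simple objects of C(B_r) = SO(2r+1)_2, r >= 1:
   L1 = X_0 (unit), LV = X_{2 lambda_1}, LG i = X_{gamma^i} (1 <= i <= r),
   LE = X_epsilon, LE' = X_epsilon'. *)
Inductive label : Set :=
  | L1 : label
  | LV : label
  | LG : nat -> label
  | LE : label
  | LE' : label.

Definition valid (r : nat) (x : label) : Prop :=
  match x with
  | LG i => (1 <= i <= r)%nat
  | _ => True
  end.

Definition dim (r : nat) (x : label) : R :=
  match x with
  | L1 => 1
  | LV => 1
  | LG _ => 2
  | LE => sqrt (INR (2 * r + 1))
  | LE' => sqrt (INR (2 * r + 1))
  end.

(* gamma^k for 1 <= k <= 2r is identified with gamma^(2r+1-k) when k > r. *)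
Definition refl (r k : nat) : nat := if Nat.leb k r then k else (2 * r + 1 - k)%nat.

Definition all_gammas (r : nat) : list label := map LG (seq 1 r).

(* Fusion rules of C(B_r): fusion r a b is the list of simple summands
   (with multiplicity) of X_a (x) X_b. *)
Definition fusion (r : nat) (a b : label) : list label :=
  match a, b with
  | L1, x => x :: nil
  | x, L1 => x :: nil
  | LV, LV => L1 :: nil
  | LV, LG i => LG i :: nil
  | LG i, LV => LG i :: nil
  | LV, LE => LE' :: nil
  | LE, LV => LE' :: nil
  | LV, LE' => LE :: nil
  | LE', LV => LE :: nil
  | LG i, LG j =>
      if Nat.eqb i j then L1 :: LV :: LG (refl r (2 * i)) :: nil
      else LG (refl r (i + j)) :: LG (if Nat.leb i j then j - i else i - j)%nat :: nil
  | LG _, LE => LE :: LE' :: nil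
  | LE, LG _ => LE :: LE' :: nil
  | LG _, LE' => LE :: LE' :: nil
  | LE', LG _ => LE :: LE' :: nil
  | LE, LE => L1 :: all_gammas r
  | LE', LE' => L1 :: all_gammas r
  | LE, LE' => LV :: all_gammas r
  | LE', LE => LV :: all_gammas r
  end.

(* Normalized S-matrix entries given in the context; the entries among
   {epsilon, epsilon'} are not specified there, hence [None]. *)
Definition stilde (r : nat) (a b : label) : option R :=
  match a, b with
  | L1, x => Some (dim r x)
  | x, L1 => Some (dim r x)
  | LV, LV => Some 1
  | LV, LG _ => Some 2
  | LG _, LV => Some 2
  | LV, LE | LV, LE' | LE, LV | LE', LV => Some (- sqrt (INR (2 * r + 1)))
  | LG i, LG j => Some (4 * cos (2 * INR (i * j) * PI / INR (2 * r + 1)))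
  | LG _, LE | LG _, LE' | LE, LG _ | LE', LG _ => Some 0
  | _, _ => None
  end.

Definition inD (t : nat) (x : label) : Prop :=
  x = L1 \/ x = LV \/ exists i, (1 <= i <= (t - 1) / 2)%nat /\ x = LG (i * t).

Definition fusion_closed (r : nat) (P : label -> Prop) : Prop :=
  forall a b c, P a -> P b -> In c (fusion r a b) -> P c.

Definition symmetric_sub (r : nat) (P : label -> Prop) : Prop :=
  forall a b, P a -> P b -> stilde r a b = Some (dim r a * dim r b).

(* Main.v *)
Require Import Defs.
From Stdlib Require Import Reals Lia Arith List.

Lemma key (m s : nat) : (s * (2*m+1) <= 2*m*(m+1) <-> s <= m)%nat.
Proof.
  split; intro H.
  - destruct (le_lt_dec s m) as [h|h]; auto.
    assert ((m+1)*(2*m+1) <= s*(2*m+1))%nat by (apply Nat.mul_le_mono_r; lia). lia.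
  - assert (s*(2*m+1) <= m*(2*m+1))%nat by (apply Nat.mul_le_mono_r; lia). lia.
Qed.

Lemma gen (m s : nat) (hs : (1 <= s <= 2*m)%nat) :
  exists k, (1 <= k <= m)%nat /\
    refl (2*m*(m+1)) (s*(2*m+1)) = (k*(2*m+1))%nat.
Proof.
  unfold refl. destruct (Nat.leb_spec (s*(2*m+1)) (2*m*(m+1))) as [h|h].
  - exists s. apply (proj1 (key m s)) in h. split; [lia|reflexivity].
  - exists (2*m+1-s)%nat. assert (~ (s <= m)%nat) by (rewrite <- (key m s); apply Nat.lt_nge; exact h).
    split; [lia|]. rewrite Nat.mul_sub_distr_r.
    replace (2*(2*m*(m+1))+1)%nat with ((2*m+1)*(2*m+1))%nat by ring. reflexivity.
Qed.

Theorem lemma3p2 (r t : nat) (hr : (1 <= r)%nat) (ht : (2 * r + 1 = t * t)%nat) :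
  (forall x, inD t x -> valid r x) /\
  fusion_closed r (inD t) /\
  symmetric_sub r (inD t).
Proof.
  destruct (Nat.Even_or_Odd t) as [[k hk]|[m hm]].
  { subst t. exfalso. nia. }
  subst t.
  assert (hr' : r = (2*m*(m+1))%nat) by nia. subst r.
  assert (hd : ((2*m+1-1)/2 = m)%nat).
  { replace (2*m+1-1)%nat with (m*2)%nat by lia. apply Nat.div_mul; lia. }
  unfold inD; rewrite hd.
  split; [|split].
  - intros x [->|[->|[i [hi ->]]]]; simpl; auto.
    assert (i*(2*m+1) <= 2*m*(m+1))%nat by (apply (proj2 (key m i)); lia). lia.
  - intros a b c Ha Hb Hc.
    destruct Ha as [->|[->|[i [hi ->]]]];
    destruct Hb as [->|[->|[j [hj ->]]]]; cbn [fusion] in Hc.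
    all: try (destruct Hc as [<-|[]]; first [left; reflexivity | right; left; reflexivity | right; right; eauto]; fail).
    destruct (Nat.eqb_spec (i*(2*m+1)) (j*(2*m+1))) as [e|e]; cbn [In] in Hc.
      * assert (i = j) by nia. subst j.
        destruct Hc as [<-|[<-|[<-|[]]]]; auto.
        right; right. replace (2*(i*(2*m+1)))%nat with ((2*i)*(2*m+1))%nat by ring.
        destruct (gen m (2*i)) as [k [hk ->]]; [lia|]. eauto.
      * assert (i <> j) by (intro; subst; auto).
        destruct Hc as [<-|[<-|[]]]; right; right.
        -- replace (i*(2*m+1) + j*(2*m+1))%nat with ((i+j)*(2*m+1))%nat by ring.
           destruct (gen m (i+j)) as [k [hk ->]]; [lia|]. eauto.
        -- destruct (Nat.leb_spec (i*(2*m+1)) (j*(2*m+1))).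
           ++ exists (j-i)%nat. split; [nia|]. rewrite Nat.mul_sub_distr_r; auto.
           ++ exists (i-j)%nat. split; [nia|]. rewrite Nat.mul_sub_distr_r; auto.
  - intros a b Ha Hb.
    destruct Ha as [->|[->|[i [hi ->]]]];
    destruct Hb as [->|[->|[j [hj ->]]]]; cbn [stilde dim]; f_equal; try ring.
    replace (2 * INR (i * (2 * m + 1) * (j * (2 * m + 1))) * PI / INR (2 * (2 * m * (m + 1)) + 1))
      with (0 + 2 * INR (i*j) * PI).
    + rewrite cos_period, cos_0. ring.
    + replace (i * (2 * m + 1) * (j * (2 * m + 1)))%nat with ((i*j)*((2*m+1)*(2*m+1)))%nat by ring.
      replace (2 * (2 * m * (m + 1)) + 1)%nat with ((2*m+1)*(2*m+1))%nat by ring.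
      rewrite (mult_INR (i*j)). field. apply not_0_INR. lia.
Qed.
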